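(* Let $N$ be a finite or infinite set and $\mathcal A\subseteq\mathcal P(N)$ a field of sets over $N$. Let $v\colon\mathcal A\to\mathbb R$ be a coalition function with $v(\emptyset)=0$ which is bounded below (there is $L\in\mathbb R$ with $v(S)\ge L$ for all $S\in\mathcal A$). For each $\varepsilon>0$ define $v_\varepsilon\colon\mathcal A\to\mathbb R$ by $v_\varepsilon(N)=v(N)+\varepsilon$ and $v_\varepsilon(S)=v(S)$ for all $S\in\mathcal A\setminus\{N\}$. If $\mathrm{ba\text{-}core}(v_\varepsilon)\neq\emptyset$ for all $\varepsilon>0$, then $\mathrm{ba\text{-}core}(v)\neq\emptyset$.
   Context: A field of sets over $N$ is a collection $\mathcal A\subseteq\mathcal P(N)$ with $\emptyset\in\mathcal A$, closed under complements in $N$ and finite unions. $\mathrm{ba}(\mathcal A)$ is the set of bounded additive set functions $\mu\colon\mathcal A\to\mathbb R$ (bounded: $\sup_{S\in\mathcal A}|\mu(S)|<\infty$; additive: $\mu(S\cup T)=\mu(S)+\mu(T)$ for disjoint $S,T\in\mathcal A$). For a coalition function $w\colon\mathcal A\to\mathbb R$, $\mathrm{ba\text{-}core}(w)=\{\mu\in\mathrm{ba}(\mathcal A):\mu(N)=w(N),\ \mu(S)\ge w(S)\text{ for all }S\in\mathcal A\setminus\{N\}\}$. *)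

(* Defs.v *)
From HB Require Import structures.
From mathcomp Require Import all_boot all_order all_algebra.
From mathcomp Require Import boolp classical_sets reals.
Set Implicit Arguments. Unset Strict Implicit. Unset Printing Implicit Defensive.
Import Order.TTheory GRing.Theory Num.Theory.
Local Open Scope classical_set_scope.
Local Open Scope ring_scope.

Definition field_of_sets (N : Type) (A : set (set N)) : Prop :=
  [/\ A set0,
      (forall S, A S -> A (~` S)) &
      (forall S T, A S -> A T -> A (S `|` T))].

(* mu restricted to A is a bounded additive set function, i.e. an element of ba(A).
   (Values of mu outside A are irrelevant.) *)
Definition is_ba (N : Type) (R : realType) (A : set (set N)) (mu : set N -> R) : Prop :=
  (exists M : R, forall S, A S -> `|mu S| <= M) /\
  (forall S T, A S -> A T -> S `&` T = set0 -> mu (S `|` T) = mu S + mu T).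

Definition in_ba_core (N : Type) (R : realType) (A : set (set N))
    (w : set N -> R) (mu : set N -> R) : Prop :=
  [/\ is_ba A mu, mu setT = w setT &
      (forall S, A S -> S <> setT -> w S <= mu S)].

Definition v_eps (N : Type) (R : realType) (v : set N -> R) (eps : R) : set N -> R :=
  fun S => if pselect (S = setT) then v setT + eps else v S.

(* Main.v *)
Require Import Defs.
From HB Require Import structures.
From mathcomp Require Import all_boot all_order all_algebra.
From mathcomp Require Import boolp classical_sets reals.
From mathcomp Require Import all_classical all_reals all_analysis.
From mathcomp Require Import lra.
Import Order.TTheory GRing.Theory Num.Theory.
Import numFieldTopology.Exports numFieldNormedType.Exports.
Local Open Scope classical_set_scope.
Local Open Scope ring_scope.
Notation PTy N R := {ptws set N -> R}.
Section S. Variables (N : Type) (R : realType).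
Local Notation PT := {ptws set N -> R}.
Lemma hc (S : set N) : continuous (fun f : PT => f S).
Proof. exact: (@proj_continuous (set N) (fun _ => R) S). Qed.
Lemma closed_all (I : Type) (Q : I -> set PT) :
  (forall i, closed (Q i)) -> closed [set f | forall i, Q i f].
Proof.
move=> h.
have -> : [set f | forall i, Q i f] = \bigcap_(i in setT) Q i.
  by apply/seteqP; split => f /= H i //; apply: H.
by apply: closed_bigI => i _; apply: h.
Qed.

Lemma closed_imp (Q : Prop) (X : set PT) : closed X -> closed [set f | Q -> X f].
Proof.
move=> cX; case: (pselect Q) => q.
  have -> : [set f | Q -> X f] = X by apply/seteqP; split => f /=; [apply| move=> ? _].
  by [].
have -> : [set f | Q -> X f] = setT by apply/seteqP; split => f //= _ /q.
exact: closedT.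
Qed.

Lemma closed_coord (S : set N) (D : set R) : closed D -> closed [set f : PT | D (f S)].
Proof.
move=> cD.
have := @preimage_closed PT R (fun f : PT => f S) D (fun x _ => hc S x) cD.
exact.
Qed.
Lemma closed_add (S T U : set N) : closed [set f : PT | f U = f S + f T].
Proof.
have hST : continuous (fun f : PT => (f S + f T : R^o)).
  move=> x; exact: (@continuousD R R^o PT (fun f : PT => (f S : R^o)) (fun f : PT => (f T : R^o)) x (hc S x) (hc T x)).
have hcc : continuous ((fun f : PT => (f U : R^o)) - (fun f : PT => (f S + f T : R^o))).
  move=> x; exact: (@continuousB R R^o PT (fun f : PT => (f U : R^o)) (fun f : PT => (f S + f T : R^o)) x (hc U x) (hST x)).
have h := @preimage_closed PT R^o _ [set x | x = 0] (fun x _ => hcc x) (@closed_eq _ 0).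
have -> : [set f : PT | f U = f S + f T] = ((fun f : PT => (f U : R^o)) - (fun f : PT => (f S + f T : R^o))) @^-1` [set x | x = 0].
  have E : forall f : PT, ((fun f : PT => (f U : R^o)) - (fun f : PT => (f S + f T : R^o))) f = f U - (f S + f T) by [].
  apply/seteqP; split => f /=; rewrite /preimage /= E.
    by move=> ->; rewrite subrr.
  by move/eqP; rewrite subr_eq0 => /eqP.
exact: h.
Qed.
Lemma closed_le2 (S : set N) (a : R) : closed [set f : PT | a <= f S].
Proof. apply: (@closed_coord S [set x : R | a <= x]); exact: closed_ge. Qed.

Lemma closed_ge2 (S : set N) (a : R) : closed [set f : PT | f S <= a].
Proof. apply: (@closed_coord S [set x : R | x <= a]); exact: closed_le. Qed.

Lemma compact_box (M : R) : compact [set f : PT | forall S, `[-M, M]%classic (f S)].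
Proof.
exact: (@tychonoff (set N) (fun _ => R) (fun _ => `[-M, M]%classic) (fun _ => @segment_compact R _ _)).
Qed.

Lemma closed_box (M : R) : closed [set f : PT | forall S, `[-M, M]%classic (f S)].
Proof.
have h : forall S, closed [set f : PT | `[-M, M]%classic (f S)].
  by move=> S; apply: (@closed_coord S `[-M, M]%classic); exact: interval_closed.
exact: (@closed_all _ _ h).
Qed.
End S.
Arguments closed_imp {N R Q X}.
Arguments closed_all {N R I Q}.
Arguments closed_le2 {N R}.
Arguments closed_ge2 {N R}.
Arguments closed_add {N R}.
Arguments compact_box {N R}.
Arguments closed_box {N R}.

Theorem corollary6 (N : Type) (R : realType) (A : set (set N)) (v : set N -> R) :
  field_of_sets A ->
  v set0 = 0 ->
  (exists L : R, forall S, A S -> L <= v S) ->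
  (forall eps : R, 0 < eps -> exists mu : set N -> R, in_ba_core A (v_eps v eps) mu) ->
  exists mu : set N -> R, in_ba_core A v mu.
Proof.
move=> [A0 AC AU] v0 [L hL] hcore.
have AT : A setT by rewrite -setC0; exact: AC.
have L0 : L <= 0 by rewrite -v0; exact: hL.
have nvT : - v setT <= `|v setT| by rewrite -normrN ler_norm.
have nn : 0 <= `|v setT| := normr_ge0 _.
pose L1 := L - `|v setT|.
pose M := v setT + 1 - 2 * L1.
have bnd : forall eps mu, 0 < eps -> eps <= 1 -> in_ba_core A (v_eps v eps) mu ->
    forall S, A S -> L1 <= mu S <= v setT + 1 - L1.
  move=> eps mu e0 e1 [[_ add] muT ge].
  have vT : v_eps v eps setT = v setT + eps by rewrite /v_eps; case: pselect.
  have vS : forall S, S <> setT -> v_eps v eps S = v S.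
    by move=> S nS; rewrite /v_eps; case: pselect.
  have low : forall S, A S -> L1 <= mu S.
    move=> S AS; case: (pselect (S = setT)) => [->|nS].
      rewrite muT vT /L1; lra.
    have := ge S AS nS; rewrite vS //; have := hL S AS; rewrite /L1; lra.
  move=> S AS; rewrite low //=.
  have := add S (~` S) AS (AC _ AS) (setICr S); rewrite setUCr muT vT.
  have := low _ (AC _ AS); lra.
pose e (n : nat) : R := n.+1%:R^-1.
have e0 : forall n, 0 < e n by move=> n; rewrite /e invr_gt0 ltr0n.
have e1 : forall n, e n <= 1 by move=> n; rewrite /e invf_le1 ?ltr0n // ler1n.
pose K := [set f : PTy N R | forall S, `[-M, M]%classic (f S)].
pose Hadd := [set f : PTy N R | forall S T, A S -> A T -> S `&` T = set0 -> f (S `|` T) = f S + f T].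
pose Hge := [set f : PTy N R | forall S, A S -> S <> setT -> v S <= f S].
pose G (n : nat) := K `&` Hadd `&` [set f : PTy N R | v setT <= f setT]
   `&` [set f : PTy N R | f setT <= v setT + e n] `&` Hge.
have exG : forall n, exists f : PTy N R, G n f.
  move=> n; have [mu hmu] := hcore _ (e0 n).
  have hb := bnd _ _ (e0 n) (e1 n) hmu.
  case: hmu => [[_ add] muT ge].
  pose f : PTy N R := fun S => if pselect (A S) then mu S else 0.
  have fE : forall S, A S -> f S = mu S by move=> S AS; rewrite /f; case: pselect.
  have vT : v_eps v (e n) setT = v setT + e n by rewrite /v_eps; case: pselect.
  exists f; split; [split; [split; [split|]|]|].
  - move=> S; rewrite /= in_itv /=; rewrite /f; case: pselect => AS /=.
      have /andP[h1 h2] := hb S AS; apply/andP; split; rewrite /M /L1 in h1 h2 *; lra.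
    apply/andP; split; rewrite /M /L1; lra.
  - move=> S T AS AT' ST; rewrite !fE //; last exact: AU.
    exact: add.
  - rewrite /= fE // muT vT; have := e0 n; lra.
  - by rewrite /= fE // muT vT.
  - move=> S AS nS; rewrite fE //; have := ge S AS nS.
    by rewrite /v_eps; case: pselect.
have Gdec : forall i j, (i <= j)%N -> G j `<=` G i.
  move=> i j ij f [[[[hK ha] h1] h2] h3]; split => //; split; first by split.
  apply: (le_trans h2); rewrite lerD2l /e lef_pV2 ?posrE ?ltr0n // ler_nat.
  by rewrite ltnS.
pose F := filter_from setT G.
have FF : Filter F.
  apply: filter_fromT_filter; first by exists 0%N.
  move=> i j; exists (maxn i j) => f Gf; split; apply: (Gdec _ (maxn i j)) => //.
    exact: leq_maxl.
  exact: leq_maxr.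
have PF : ProperFilter F.
  by apply: filter_from_proper => // i _; exact: exG.
have FK : F K by exists 0%N => // f [[[[]]]].
have [p [Kp clp]] := compact_box M F PF FK.
have Gp : forall n, G n p.
  move=> n.
  have cG : closed (G n).
    apply: closedI; last exact: (closed_all (fun S => closed_imp (closed_imp (closed_le2 S _)))).
    apply: closedI; last exact: closed_ge2.
    apply: closedI; last exact: closed_le2.
    apply: closedI; first exact: closed_box.
    exact: (closed_all (fun S => closed_all (fun T => closed_imp (closed_imp (closed_imp (closed_add S T _)))))).
  apply: cG; move: clp; rewrite clusterE => /(_ (G n)); apply.
  by exists n.
have [[[[_ hadd] h1] _] hge] := Gp 0%N.
exists p; split.
- split; last exact: hadd.
  exists M => S _; have := Kp S; rewrite /= in_itv /= => /andP[a b].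
  by rewrite ler_norml a b.
- apply/eqP; rewrite eq_le h1 andbT.
  apply/ler_addgt0Pr => x x0.
  pose n := Num.Def.trunc (x^-1).
  have [[[[_ _] _] h2] _] := Gp n.
  apply: (le_trans h2); rewrite lerD2l.
  have := truncnS_gt (x^-1); rewrite -/n => hn.
  rewrite /e -[x in _ <= x]invrK lef_pV2 ?posrE ?ltr0n ?invr_gt0 //.
  exact: ltW.
- exact: hge.
Qed.
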